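(* Let $K$ be a commutative ring of characteristic $0$ with unit, let $M$ be a multiplicative $\mathbb{R}$-vector subspace of $\mathcal{H}^{>0}$, let $G=\sum_{\alpha}a_\alpha X^\alpha$ be a generalized power series over $K$ in $X=(X_0,\dots,X_k)$, let $m_0,\dots,m_k\in M$ be small, and let $n\in M$. Then the set $$S_n^G:=\{\alpha\in\operatorname{supp}(G):\ m^\alpha=n\}$$ is finite, where $m^\alpha:=m_0^{\alpha_0}\cdots m_k^{\alpha_k}$.
   Context: $\mathcal{H}$ denotes the Hardy field of germs at $+\infty$ of unary functions definable in the o-minimal structure $\mathbb{R}_{\mathrm{an},\exp}$, ordered by $f<g$ iff $f(x)<g(x)$ for all sufficiently large $x$; $\mathcal{H}^{>0}=\{h\in\mathcal{H}:h>0\}$. A multiplicative $\mathbb{R}$-vector subspace of $\mathcal{H}^{>0}$ is a subgroup closed under real powers. A germ $h$ is small if $\lim_{x\to+\infty}h(x)=0$. A generalized power series over $K$ is a formal series $G=\sum_{\alpha\in[0,\infty)^{k+1}}a_\alpha X^\alpha$ with $a_\alpha\in K$ whose support $\operatorname{supp}(G)=\{\alpha:a_\alpha\neq0\}$ is contained in a cartesian product of well-ordered subsets of $\mathbb{R}$. *)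

(* Defs.v *)
From HB Require Import structures.
From mathcomp Require Import all_boot all_order all_algebra.
From mathcomp Require Import all_classical all_reals all_analysis.
Set Implicit Arguments. Unset Strict Implicit. Unset Printing Implicit Defensive.
Import Order.TTheory GRing.Theory Num.Theory.
Import numFieldNormedType.Exports.
Local Open Scope classical_set_scope.
Local Open Scope ring_scope.

(* Germs at +oo are represented by functions R -> R; two functions
   represent the same germ iff they agree eventually. *)
Definition germ_eq {R : realType} (f g : R -> R) : Prop :=
  \forall x \near +oo, f x = g x.

Definition Hpos {R : realType} (H : set (R -> R)) : set (R -> R) :=
  [set f | H f /\ \forall x \near +oo, 0 < f x].

(* M is a multiplicative R-vector subspace of H^{>0}: a subgroup (up to germ
   equality) closed under real powers. *)
Definition mult_R_subspace {R : realType} (H M : set (R -> R)) : Prop :=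
  [/\ M `<=` Hpos H,
      M (fun=> 1),
      (forall f g, M f -> M g -> exists2 h, M h & germ_eq h (fun x => f x * g x)),
      (forall f, M f -> exists2 h, M h & germ_eq h (fun x => (f x)^-1))
    & (forall f (r : R), M f -> exists2 h, M h & germ_eq h (fun x => f x `^ r))].

Definition small {R : realType} (f : R -> R) : Prop :=
  f x @[x --> +oo] --> 0.

Definition char0 (K : comNzRingType) : Prop :=
  forall n : nat, (n%:R : K) = 0 -> n = 0%N.

Definition well_ordered_set {R : realType} (W : set R) : Prop :=
  forall A : set R, A `<=` W -> A !=set0 -> exists2 a, A a & forall b, A b -> a <= b.

Definition supp {R : realType} {K : comNzRingType} {k : nat}
  (a : ('I_k.+1 -> R) -> K) : set ('I_k.+1 -> R) := [set al | a al != 0].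

Definition gen_power_series {R : realType} {K : comNzRingType} {k : nat}
  (a : ('I_k.+1 -> R) -> K) : Prop :=
  (forall al, supp a al -> forall i, 0 <= al i) /\
  exists W : 'I_k.+1 -> set R, (forall i, well_ordered_set (W i)) /\
    (forall al, supp a al -> forall i, W i (al i)).

Definition mpow {R : realType} {k : nat} (m : 'I_k.+1 -> R -> R)
  (al : 'I_k.+1 -> R) : R -> R :=
  fun x => \prod_(i < k.+1) (m i x) `^ (al i).

Definition S_set {R : realType} {K : comNzRingType} {k : nat}
  (a : ('I_k.+1 -> R) -> K) (m : 'I_k.+1 -> R -> R) (n : R -> R)
  : set ('I_k.+1 -> R) :=
  [set al | supp a al /\ germ_eq (mpow m al) n].

(* Main.v *)
Require Import Defs.
From HB Require Import structures.
From mathcomp Require Import all_boot all_order all_algebra.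
From mathcomp Require Import all_classical all_reals all_analysis.
Set Implicit Arguments. Unset Strict Implicit. Unset Printing Implicit Defensive.
Import Order.TTheory GRing.Theory Num.Theory.
Import numFieldNormedType.Exports.
Local Open Scope classical_set_scope.
Local Open Scope ring_scope.

Lemma extract_sub (R : realType) (W : set R) (f : nat -> R) :
  well_ordered_set W -> (forall j, W (f j)) ->
  exists g : nat -> nat, (forall j, (g j < g j.+1)%N) /\ (forall j, f (g j) <= f (g j.+1)).
Proof.
move=> WW fW.
have Hn : forall p : nat, {m : nat | (p <= m)%N /\ forall j, (p <= j)%N -> f m <= f j}.
  move=> p; apply: cid.
  have sub : [set f j | j in [set j | (p <= j)%N]] `<=` W by move=> _ [j _ <-].
  have ne : [set f j | j in [set j | (p <= j)%N]] !=set0 by exists (f p); exists p => /=.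
  have [a [j pj <-] amin] := WW _ sub ne.
  exists j; split=> // i pi; apply: amin; by exists i.
pose g := fix g j := match j with 0 => sval (Hn 0%N) | j'.+1 => sval (Hn (g j').+1) end.
have gP : forall j, exists p, (p <= g j)%N /\ forall i, (p <= i)%N -> f (g j) <= f i.
  case=> [|j] /=; [exists 0%N | exists (g j).+1]; by case: (Hn _) => m [].
have gS : forall j, (g j < g j.+1)%N.
  by move=> j /=; case: (Hn _) => m [].
exists g; split=> // j.
have [p [pj pm]] := gP j; apply: pm.
by apply: leq_trans pj (ltnW (gS j)).
Qed.

Lemma chain_sub (R : realType) k (W : 'I_k.+1 -> set R) (s : nat -> 'I_k.+1 -> R) :
  (forall i, well_ordered_set (W i)) -> (forall j i, W i (s j i)) ->
  exists phi : nat -> nat, (phi 0%N < phi 1%N)%N /\ forall i, s (phi 0%N) i <= s (phi 1%N) i.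
Proof.
move=> WW sW.
suff: forall c, (c <= k.+1)%N -> exists phi : nat -> nat, (forall j, (phi j < phi j.+1)%N) /\
  forall i : 'I_k.+1, (i < c)%N -> forall j, s (phi j) i <= s (phi j.+1) i.
  move=> /(_ k.+1 (leqnn _)) [phi [phiS phiL]]; exists phi; split=> // i.
  exact: phiL.
elim=> [_|c IH ck].
  by exists id; split=> // i.
have [phi [phiS phiL]] := IH (ltnW ck).
pose ic : 'I_k.+1 := Ordinal ck.
have [g [gS gL]] := @extract_sub R (W ic) (fun j => s (phi j) ic) (WW ic) (fun j => sW _ _).
exists (phi \o g); split.
  by move=> j /=; apply: (homo_ltn (r := fun a b => (a < b)%N)) => //; exact: ltn_trans.
move=> i; rewrite ltnS leq_eqVlt => /orP [/eqP ei|ilt] j /=.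
  have -> : i = ic by apply: val_inj.
  exact: gL.
apply: (homo_leq (f := fun j => s (phi j) i) (r := fun a b => a <= b)).
- by move=> x; exact: lexx.
- by move=> y x z; exact: le_trans.
- by move=> ?; exact: phiL.
- exact: ltnW.
Qed.

Lemma strict_mpow (R : realType) k (m : 'I_k.+1 -> R -> R) (al be : 'I_k.+1 -> R) (x : R) :
  (forall i, 0 < m i x < 1) -> (forall i, al i <= be i) -> al != be ->
  mpow m be x < mpow m al x.
Proof.
move=> m01 albe ne.
have [i0 ne0] : exists i0, al i0 != be i0.
  apply: contrapT => h; move/negP: ne; apply; apply/eqP/funext => i.
  by apply: contrapT => h2; apply: h; exists i; apply/eqP.
have lt0 : al i0 < be i0 by rewrite lt_neqAle ne0 albe.
rewrite /mpow (bigD1 i0) //= [X in _ < X](bigD1 i0) //=.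
have [mp m1] := andP (m01 i0).
apply: (@le_lt_trans _ _ (m i0 x `^ be i0 * \prod_(i < k.+1 | i != i0) m i x `^ al i)).
  apply: ler_wpM2l; first exact: powR_ge0.
  apply: ler_prod => i _; rewrite powR_ge0 /=.
  have [p1 p2] := andP (m01 i); apply: ger_powR => //.
  by rewrite p1 ltW.
rewrite ltr_pM2r; last by apply: prodr_gt0 => i _; apply: powR_gt0; case/andP: (m01 i).
rewrite /powR gt_eqF // ltr_expR ltr_nM2r //.
by apply: ln_lt0; rewrite mp m1.
Qed.

Theorem lemma5p1 (R : realType) (H : set (R -> R)) (K : comNzRingType)
  (M : set (R -> R)) (k : nat) (a : ('I_k.+1 -> R) -> K)
  (m : 'I_k.+1 -> R -> R) (n : R -> R) :
  char0 K ->
  mult_R_subspace H M ->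
  gen_power_series a ->
  (forall i, M (m i) /\ small (m i)) ->
  M n ->
  finite_set (S_set a m n).
Proof.
move=> _ [MH _ _ _ _] [_ [W [WW suppW]]] mM _.
apply: contrapT => /infiniteP /pcard_leP /injfunPex [f fS finj].
have sW : forall j i, W i (f j i).
  by move=> j i; have [sa _] := fS j I; exact: suppW.
have [phi [phi01 phile]] := chain_sub WW sW.
have [[sa0 e0] [sa1 e1]] := (fS (phi 0%N) I, fS (phi 1%N) I).
have ne : f (phi 0%N) != f (phi 1%N).
  apply/eqP => /finj; rewrite !in_setT => /(_ isT isT) h.
  by move: phi01; rewrite h // ltnn.
have pos : \forall x \near +oo, forall i, 0 < m i x.
  apply: filter_forall => i; have [/MH [_ p] _] := mM i; exact: p.
have lt1 : \forall x \near +oo, forall i, m i x < 1.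
  apply: filter_forall => i; have [_ sm] := mM i.
  exact: (cvgr_lt _ sm _ ltr01).
have key : \forall x \near +oo, [/\ mpow m (f (phi 1%N)) x = n x,
    mpow m (f (phi 0%N)) x = n x, forall i, 0 < m i x & forall i, m i x < 1].
  near=> x; split.
  - by near: x; exact: e1.
  - by near: x; exact: e0.
  - by near: x; exact: pos.
  - by near: x; exact: lt1.
have [x [E1 E0 P1 L1]] := filter_ex key.
have : mpow m (f (phi 1%N)) x < mpow m (f (phi 0%N)) x.
  by apply: strict_mpow phile ne => i; rewrite P1 L1.
by rewrite E1 E0 ltxx.
Unshelve. all: by end_near.
Qed.
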